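(* Let $R$ be an almost Dedekind domain and let $I$ be a nonzero integral ideal of $R$. The following are equivalent: (i) $\nu_I$ is continuous on $\mathcal{M}$; (ii) $I=J_1\cdots J_k$ for some continuous radical ideals $J_1\subseteq\cdots\subseteq J_k$; (iii) $I=J_1\cdots J_k$ for some continuous radical ideals $J_1,\ldots,J_k$.
   Context: $R$ almost Dedekind: $R_M$ is a DVR with valuation $v_M$ for every maximal $M$. $\mathcal{M}$ is $\mathrm{Max}(R)$ with the inverse topology (restriction of the coarsest topology on $\mathrm{Spec}(R)$ in which every Zariski-open Zariski-compact set is closed). For a nonzero fractional ideal $I$, $\nu_I:\mathcal{M}\to\mathbb{Z}$, $\nu_I(M)=\inf\{v_M(i)\mid i\in I\setminus\{0\}\}$; $\mathbb{Z}$ has the discrete topology; an ideal $J$ is continuous if $\nu_J$ is continuous. *)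

(* Defs.v *)
From mathcomp Require Import all_boot all_order all_algebra fraction.
From Stdlib Require Import ClassicalEpsilon.
Set Implicit Arguments. Unset Strict Implicit. Unset Printing Implicit Defensive.
Import Order.TTheory GRing.Theory Num.Theory.
Local Open Scope ring_scope.

Section AlmostDedekind.
Variable R : idomainType.

Local Notation K := {fraction R}.
Local Notation "x %:F" := (@FracField.tofrac R x).

Definition incl (A B : R -> Prop) := forall x, A x -> B x.

Definition is_ideal (I : R -> Prop) :=
  [/\ I 0, (forall x y, I x -> I y -> I (x + y)) & (forall r x, I x -> I (r * x))].

Definition nonzero_ideal (I : R -> Prop) := is_ideal I /\ exists x, I x /\ x != 0.

Definition prime_ideal (P : R -> Prop) :=
  [/\ is_ideal P, ~ P 1 & forall a b, P (a * b) -> P a \/ P b].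

Definition maximal_ideal (M : R -> Prop) :=
  [/\ is_ideal M, ~ M 1 &
      forall J, is_ideal J -> incl M J -> (forall x, J x <-> M x) \/ (forall x, J x)].

Definition radical_ideal (J : R -> Prop) :=
  is_ideal J /\ forall x n, J (x ^+ n.+1) -> J x.

Definition ideal_mul (I J : R -> Prop) : R -> Prop :=
  fun x => exists s : seq (R * R),
    (forall p, p \in s -> I p.1 /\ J p.2) /\ x = \sum_(p <- s) (p.1 * p.2).

Definition ideal_prod (Js : seq (R -> Prop)) : R -> Prop :=
  foldr ideal_mul (fun _ => True) Js.

Definition localization (M : R -> Prop) : K -> Prop :=
  fun z => exists a s : R, ~ M s /\ z = a%:F / s%:F.

(** Normalized discrete valuation K^* ->> Z (values at 0 are irrelevant). *)
Definition discrete_valuation (v : K -> int) :=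
  [/\ (forall x y, x != 0 -> y != 0 -> v (x * y) = v x + v y),
      (forall x y, x != 0 -> y != 0 -> x + y != 0 -> Num.min (v x) (v y) <= v (x + y))
    & (forall n : int, exists x, x != 0 /\ v x = n)].

(** R_M is a DVR whose (normalized) valuation is v. *)
Definition DVR_valuation (M : R -> Prop) (v : K -> int) :=
  discrete_valuation v /\
  forall z, localization M z <-> (z = 0 \/ 0 <= v z).

Definition almost_dedekind :=
  forall M, maximal_ideal M -> exists v, DVR_valuation M v.

(** v_M : the valuation of R_M (unique; selected by choice). *)
Definition vM (M : R -> Prop) : K -> int :=
  epsilon (inhabits (fun _ => 0)) (DVR_valuation M).

Definition is_inf_val (I : R -> Prop) (M : R -> Prop) (n : int) :=
  (exists i, I i /\ i != 0 /\ vM M i%:F = n) /\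
  (forall i, I i -> i != 0 -> n <= vM M i%:F).

Definition nu (I : R -> Prop) (M : R -> Prop) : int :=
  epsilon (inhabits 0) (is_inf_val I M).

Definition Spec : (R -> Prop) -> Prop := prime_ideal.

Definition zariski_open (U : (R -> Prop) -> Prop) :=
  exists A : R -> Prop, forall P, U P <-> (Spec P /\ ~ incl A P).

Definition zariski_compact (U : (R -> Prop) -> Prop) :=
  forall F : ((R -> Prop) -> Prop) -> Prop,
    (forall V, F V -> zariski_open V) ->
    (forall P, U P -> exists V, F V /\ V P) ->
    exists s : seq ((R -> Prop) -> Prop),
      (forall V, List.In V s -> F V) /\
      (forall P, U P -> exists V, List.In V s /\ V P).

Definition is_topology (O : ((R -> Prop) -> Prop) -> Prop) :=
  [/\ (forall U, O U -> forall P, U P -> Spec P),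
      O (fun _ => False), O Spec,
      (forall U V, O U -> O V -> O (fun P => U P /\ V P))
    & (forall F : ((R -> Prop) -> Prop) -> Prop, (forall U, F U -> O U) ->
         O (fun P => exists U, F U /\ U P))].

(** Inverse topology: the coarsest topology on Spec in which every
    Zariski-open Zariski-compact set is closed. *)
Definition inverse_open (U : (R -> Prop) -> Prop) :=
  forall O, is_topology O ->
    (forall C, zariski_open C -> zariski_compact C ->
       O (fun P => Spec P /\ ~ C P)) ->
    O U.

(** Open sets of the subspace Max(R) (= \mathcal{M}) of Spec with the inverse topology. *)
Definition max_open (V : (R -> Prop) -> Prop) :=
  exists U, inverse_open U /\ forall M, V M <-> (maximal_ideal M /\ U M).

(** nu_J : M -> Z continuous, Z discrete: every fibre is open. *)
Definition nu_continuous (J : R -> Prop) :=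
  forall n : int, max_open (fun M => maximal_ideal M /\ nu J M = n).

(** Continuous ideal (nu_J is only defined for nonzero J). *)
Definition continuous_ideal (J : R -> Prop) := nonzero_ideal J /\ nu_continuous J.

End AlmostDedekind.

(* Main.v *)
Require Import Defs.
From mathcomp Require Import all_boot all_order all_algebra fraction.
From mathcomp Require Import classical_sets.
From Stdlib Require Import ClassicalEpsilon Classical FunctionalExtensionality PropExtensionality.
From mathcomp Require Import zify.
Set Implicit Arguments. Unset Strict Implicit. Unset Printing Implicit Defensive.
Import Order.TTheory GRing.Theory Num.Theory.
Local Open Scope ring_scope.

Section Basic.
Variable R : idomainType.

Lemma exists_maximal (C : R -> Prop) : is_ideal C -> ~ C 1 ->
  exists M, maximal_ideal M /\ incl C M.
Proof.
move=> hC nC1.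
pose P : set (set R) := fun J => J = set0 \/ (is_ideal J /\ ~ J 1 /\ incl C J).
have [|A [PA Amax]] := @Zorn_bigcup R P.
  move=> F FP tot.
  case: (classic (exists J, F J /\ J <> set0)) => [[J0 [FJ0 J0n]]|none].
    have hJ0 : is_ideal J0 /\ ~ J0 1 /\ incl C J0 by case: (FP _ FJ0).
    have memI X x : F X -> X x -> is_ideal X /\ ~ X 1.
      move=> FX Xx; case: (FP _ FX) => [X0|[? [? _]]]; last by [].
      by rewrite X0 in Xx.
    right; split; [split|split].
    - by exists J0 => //; case: hJ0 => [[]].
    - move=> x y [X FX Xx] [Y FY Yy].
      case: (tot _ _ FX FY) => [XY|YX].
        exists Y => //; have [[_ hD _] _] := memI _ _ FY Yy; apply: hD => //; exact: XY.
      exists X => //; have [[_ hD _] _] := memI _ _ FX Xx; apply: hD => //; exact: YX.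
    - move=> r x [X FX Xx]; exists X => //.
      by have [[_ _ hM] _] := memI _ _ FX Xx; apply: hM.
    - by move=> [X FX X1]; have [_ ?] := memI _ _ FX X1.
    - by move=> x Cx; exists J0 => //; apply: hJ0.2.2.
  left; apply: functional_extensionality => x; apply: propositional_extensionality; split; last by [].
  case=> X FX Xx; exfalso.
  apply: none; exists X; split => // X0; by rewrite X0 in Xx.
case: PA => [A0|[hA [nA1 CA]]].
  exfalso; apply: (Amax C); last by right; split => //; split => // y.
  split; first by rewrite A0.
  move=> CA; have : A 0 by apply: CA; case: hC.
  by rewrite A0.
exists A; split => //; split => // J hJ AJ.
case: (classic (J 1)) => [J1|nJ1].
  by right => x; case: hJ => _ _ hm; rewrite -[x]mulr1; apply: hm.
left => x; split; last exact: AJ.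
move=> Jx; apply: NNPP => nAx; apply: (Amax J); last first.
  right; split => //; split => // y Cy; exact/AJ/CA.
split => // JA; exact/nAx/JA.
Qed.
End Basic.

Section Ideals.
Variable R : idomainType.

Lemma max_proper (M : R -> Prop) : maximal_ideal M -> ~ M 1.
Proof. by case. Qed.

Lemma max_prime (M : R -> Prop) : maximal_ideal M -> prime_ideal M.
Proof.
case=> hM nM1 hmax; split => // a b Mab.
case: (classic (M a)) => [|nMa]; first by left. right.
pose J := fun x => exists m r, M m /\ x = m + r * a.
have M0 : M 0 by case: hM.
have hJ : is_ideal J.
  split.
  - by exists 0, 0; rewrite mul0r addr0.
  - move=> x y [m1 [r1 [M1 ->]]] [m2 [r2 [M2 ->]]]; exists (m1+m2), (r1+r2); split.
      by case: hM => _ hD _; apply: hD.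
    by rewrite mulrDl addrACA.
  - move=> r x [m [s [Mm ->]]]; exists (r * m), (r * s); split.
      by case: hM => _ _ hm; apply: hm.
    by rewrite mulrDr mulrA.
have MJ : incl M J by move=> x Mx; exists x, 0; rewrite mul0r addr0.
case: (hmax J hJ MJ) => [eqJ|allJ].
  by exfalso; apply: nMa; apply/eqJ; exists 0, 1; rewrite mul1r add0r.
have [m [r [Mm e1]]] := allJ 1.
have -> : b = m * b + r * (a * b) by rewrite mulrA -mulrDl -e1 mul1r.
case: hM => _ hD hm; apply: hD; last exact: hm.
by rewrite mulrC; apply: hm.
Qed.

Lemma prime_pow (P : R -> Prop) x n : prime_ideal P -> P (x ^+ n.+1) -> P x.
Proof.
move=> [_ _ hp]; elim: n => [|n IH]; first by rewrite expr1.
by rewrite exprS => /hp [].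
Qed.

End Ideals.

Section Val.
Variable R : idomainType.
Local Notation K := {fraction R}.
Local Notation tof := (@FracField.tofrac R).
Variable M : R -> Prop.
Hypothesis hM : maximal_ideal M.
Variable v : K -> int.
Hypothesis hv : DVR_valuation M v.

Let vmul : forall x y, x != 0 -> y != 0 -> v (x*y) = v x + v y.
Proof. by case: hv => [[]]. Qed.
Let vadd : forall x y, x != 0 -> y != 0 -> x + y != 0 ->
   Num.min (v x) (v y) <= v (x + y).
Proof. by case: hv => [[]]. Qed.
Let vsurj : forall n : int, exists x, x != 0 /\ v x = n.
Proof. by case: hv => [[]]. Qed.
Let vloc : forall z, localization M z <-> (z = 0 \/ 0 <= v z).
Proof. by case: hv. Qed.

Lemma M0 : M 0. Proof. by case: hM => [[]]. Qed.
Lemma nM1 : ~ M 1. Proof. by case: hM. Qed.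
Lemma Mmul r x : M x -> M (r * x). Proof. by case: hM => [[_ _ h] _ _]; apply: h. Qed.

Lemma v1 : v 1 = 0.
Proof.
have := vmul (oner_neq0 K) (oner_neq0 K); rewrite mulr1 => h.
by have := congr1 (fun t => t - v 1) h; rewrite /= subrr addrK => <-.
Qed.

Lemma vV z : z != 0 -> v z^-1 = - v z.
Proof.
move=> hz; have := vmul hz (invr_neq0 hz); rewrite mulfV // v1 => h; lia.
Qed.

Lemma tof_neq0 r : r != 0 -> tof r != 0.
Proof. by rewrite tofrac_eq0. Qed.

Lemma vR r : r != 0 -> 0 <= v (tof r).
Proof.
move=> r0; have : localization M (tof r).
  by exists r, 1; split; [exact: nM1 | rewrite tofrac1 divr1].
by move/vloc => [/eqP|//]; rewrite tofrac_eq0 (negbTE r0).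
Qed.

Lemma vM_pos r : r != 0 -> M r -> 0 < v (tof r).
Proof.
move=> r0 Mr; rewrite ltNge; apply/negP => hle.
have hr := tof_neq0 r0.
have : localization M (tof r)^-1 by apply/vloc; right; rewrite vV //; lia.
case=> a [s [nMs e]].
have s0 : s != 0 by apply/eqP => s0; apply: nMs; rewrite s0; exact: M0.
have hs := tof_neq0 s0.
move/(congr1 (fun z => z * tof s * tof r)): e.
rewrite mulrAC mulVf // mul1r divfK // -tofracM => /eqP; rewrite tofrac_eq => /eqP Es.
by apply: nMs; rewrite Es; apply: Mmul.
Qed.

Lemma vM_zero r : ~ M r -> v (tof r) = 0.
Proof.
move=> nMr.
have r0 : r != 0 by apply/eqP => r0; apply: nMr; rewrite r0; exact: M0.
have hr := tof_neq0 r0.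
have : localization M (tof r)^-1 by exists 1, r; rewrite tofrac1 mul1r.
move/vloc => [/eqP|]; first by rewrite invr_eq0 (negbTE hr).
rewrite vV // => h; have := vR r0; lia.
Qed.

Lemma vM_iff r : r != 0 -> M r <-> 0 < v (tof r).
Proof.
move=> r0; split; first exact: vM_pos.
move=> h; apply: NNPP => nMr; move: h; rewrite vM_zero //.
Qed.

Lemma unif : exists a, a != 0 /\ v (tof a) = 1.
Proof.
have [z [z0 vz]] := vsurj 1.
have : localization M z by apply/vloc; right; rewrite vz.
case=> a [s [nMs e]].
have s0 : s != 0 by apply/eqP => s0; apply: nMs; rewrite s0; exact: M0.
have hs := tof_neq0 s0.
have a0 : a != 0.
  apply/eqP => a0; move: z0; rewrite e a0 tofrac0 mul0r eqxx //.
exists a; split => //.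
have -> : tof a = z * tof s by rewrite e divfK.
by rewrite vmul // vz vM_zero // addr0.
Qed.

Lemma vmulR a b : a != 0 -> b != 0 ->
  v (tof (a * b)) = v (tof a) + v (tof b).
Proof. by move=> a0 b0; rewrite tofracM vmul // tof_neq0. Qed.

Lemma vexpR a n : a != 0 -> v (tof (a ^+ n)) = v (tof a) * n%:Z.
Proof.
move=> a0; elim: n => [|n IH]; first by rewrite expr0 tofrac1 v1 mulr0.
rewrite exprS vmulR // ?expf_neq0 // IH intS mulrDr mulr1 //.
Qed.

Lemma div_in a b : a != 0 -> b != 0 -> v (tof b) <= v (tof a) ->
  exists c s, ~ M s /\ s * a = c * b.
Proof.
move=> a0 b0 hab.
have ha := tof_neq0 a0; have hb := tof_neq0 b0.
have z0 : tof a / tof b != 0 by rewrite mulf_neq0 // invr_neq0.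
have : localization M (tof a / tof b).
  apply/vloc; right; rewrite vmul ?invr_neq0 // vV //; lia.
case=> c [s [nMs e]].
have s0 : s != 0 by apply/eqP => s0; apply: nMs; rewrite s0; exact: M0.
have hs := tof_neq0 s0.
move/(congr1 (fun w => w * tof b * tof s)): e.
rewrite divfK // mulrAC divfK // -!tofracM => /eqP; rewrite tofrac_eq => /eqP E.
by exists c, s; split => //; rewrite mulrC.
Qed.

Lemma vsum (T : eqType) (s : seq T) (F : T -> R) n :
  (forall t, t \in s -> F t != 0 -> n <= v (tof (F t))) ->
  \sum_(t <- s) F t != 0 -> n <= v (tof (\sum_(t <- s) F t)).
Proof.
elim: s => [|t s IH] H; first by rewrite big_nil eqxx.
rewrite big_cons => h.
have IH' : \sum_(t <- s) F t != 0 -> n <= v (tof (\sum_(t <- s) F t)).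
  by apply: IH => t' ht'; apply: H; rewrite in_cons ht' orbT.
case: (eqVneq (F t) 0) => [Ft0|Ft0].
  by rewrite Ft0 add0r in h *; exact: IH'.
case: (eqVneq (\sum_(t <- s) F t) 0) => [S0|S0].
  by rewrite S0 addr0 in h *; apply: H => //; exact: mem_head.
have hsum : tof (F t) + tof (\sum_(t <- s) F t) != 0 by rewrite -tofracD tof_neq0.
have := vadd (tof_neq0 Ft0) (tof_neq0 S0) hsum.
rewrite tofracD; apply: le_trans; rewrite le_min (IH' S0) andbT.
by apply: H => //; exact: mem_head.
Qed.

End Val.

Section Topo.
Variable R : idomainType.

Definition cont (f : (R -> Prop) -> int) :=
  forall n, max_open (fun M => maximal_ideal M /\ f M = n).

Lemma io_inter (U V : (R -> Prop) -> Prop) : inverse_open U -> inverse_open V ->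
  inverse_open (fun P => U P /\ V P).
Proof.
move=> hU hV O hO gen; have hO' := hO; case: hO' => _ _ _ hI _.
by apply: hI; [apply: hU | apply: hV].
Qed.

Lemma io_union (F : ((R -> Prop) -> Prop) -> Prop) :
  (forall U, F U -> inverse_open U) -> inverse_open (fun P => exists U, F U /\ U P).
Proof.
move=> hF O hO gen; have hO' := hO; case: hO' => _ _ _ _ hU.
by apply: hU => U FU; apply: hF.
Qed.

Lemma io_Spec : inverse_open (@Spec R).
Proof. by move=> O [] . Qed.

Lemma io_empty : inverse_open (fun _ : R -> Prop => False).
Proof. by move=> O []. Qed.

Lemma mo_ext (V W : (R -> Prop) -> Prop) : (forall M, V M <-> W M) ->
  max_open V -> max_open W.
Proof.
move=> e [U [hU hV]]; exists U; split => // M; rewrite -e; exact: hV.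
Qed.

Lemma mo_inter (V W : (R -> Prop) -> Prop) : max_open V -> max_open W ->
  max_open (fun M => V M /\ W M).
Proof.
move=> [U1 [h1 e1]] [U2 [h2 e2]]; exists (fun P => U1 P /\ U2 P); split.
  exact: io_inter.
move=> M; rewrite e1 e2; tauto.
Qed.

Lemma mo_union (F : ((R -> Prop) -> Prop) -> Prop) :
  (forall V, F V -> max_open V) -> max_open (fun M => exists V, F V /\ V M).
Proof.
move=> hF.
pose G := fun U : (R -> Prop) -> Prop => exists V, F V /\ inverse_open U /\
  (forall M, V M <-> maximal_ideal M /\ U M).
exists (fun P => exists U, G U /\ U P); split.
  by apply: io_union => U [V [_ [hU _]]].
move=> M; split.
  move=> [V [FV VM]]; have [U [hU e]] := hF V FV.
  have [hM UM] := (e M).1 VM.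
  by split => //; exists U; split => //; exists V.
move=> [hM [U [[V [FV [hU e]]] UM]]]; exists V; split => //; exact/e.
Qed.

Lemma mo_empty : max_open (fun _ : R -> Prop => False).
Proof. exists (fun _ => False); split; [exact: io_empty | by move=> M; split => -[]]. Qed.

Lemma mo_max : max_open (@maximal_ideal R).
Proof.
exists (@Spec R); split; first exact: io_Spec.
move=> M; split => [hM|[]//]; split => //; exact: max_prime.
Qed.

Lemma cont_ext f g : (forall M, maximal_ideal M -> f M = g M) -> cont f -> cont g.
Proof.
move=> e hf n; apply: mo_ext (hf n) => M; split => -[hM h]; split => //.
  by rewrite -e.
by rewrite e.
Qed.

Lemma cont_comp f (g : int -> int) : cont f -> cont (fun M => g (f M)).
Proof.
move=> hf n.
pose F := fun V : (R -> Prop) -> Prop =>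
  exists a, g a = n /\ V = (fun M => maximal_ideal M /\ f M = a).
apply: (mo_ext (V := fun M => exists V, F V /\ V M)); last first.
  by apply: mo_union => V [a [_ ->]]; apply: hf.
move=> M; split.
  by move=> [V [[a [ga ->]] [hM fM]]]; split => //; rewrite fM.
move=> [hM gf]; exists (fun M' => maximal_ideal M' /\ f M' = f M); split => //.
by exists (f M); split.
Qed.

Lemma cont_add f g : cont f -> cont g -> cont (fun M => f M + g M).
Proof.
move=> hf hg n.
pose F := fun V : (R -> Prop) -> Prop =>
  exists a, V = (fun M => (maximal_ideal M /\ f M = a) /\ (maximal_ideal M /\ g M = n - a)).
apply: (mo_ext (V := fun M => exists V, F V /\ V M)); last first.
  by apply: mo_union => V [a ->]; apply: mo_inter.
move=> M; split.
  by move=> [V [[a ->] [[hM fM] [_ gM]]]]; split => //; rewrite fM gM addrC subrK.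
move=> [hM e]; exists (fun M' => (maximal_ideal M' /\ f M' = f M) /\
  (maximal_ideal M' /\ g M' = n - f M)); split; last first.
  by split => //; split => //; rewrite -e addrC addKr.
by exists (f M); split.
Qed.

Lemma cont_const c : cont (fun _ => c).
Proof.
move=> n; case: (eqVneq c n) => [<-|cn].
  by apply: mo_ext mo_max => M; split => [|[]//]; split.
by apply: mo_ext mo_empty => M; split => // -[_ e]; rewrite e eqxx in cn.
Qed.

Lemma io_basic (U : (R -> Prop) -> Prop) : inverse_open U -> forall P, U P ->
  exists F : seq R, (forall y, y \in F -> P y) /\
    forall Q, Spec Q -> (forall y, y \in F -> Q y) -> U Q.
Proof.
move=> hU.
pose O := fun W : (R -> Prop) -> Prop => (forall P, W P -> Spec P) /\
  forall P, W P -> exists F : seq R, (forall y, y \in F -> P y) /\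
    forall Q, Spec Q -> (forall y, y \in F -> Q y) -> W Q.
suff [] : O U by [].
apply: hU.
  split.
  - by move=> W [].
  - by split.
  - by split => // P SP; exists [::]; split => // Q SQ _.
  - move=> W1 W2 [h1 g1] [h2 g2]; split; first by move=> P [/h1].
    move=> P [W1P W2P]; have [F1 [F1P F1Q]] := g1 _ W1P.
    have [F2 [F2P F2Q]] := g2 _ W2P.
    exists (F1 ++ F2); split.
      by move=> y; rewrite mem_cat => /orP [/F1P|/F2P].
    move=> Q SQ FQ; split.
      by apply: F1Q => // y yF; apply: FQ; rewrite mem_cat yF.
    by apply: F2Q => // y yF; apply: FQ; rewrite mem_cat yF orbT.
  - move=> Fam hF; split.
      by move=> P [W [FW WP]]; case: (hF W FW) => h _; apply: h.
    move=> P [W [FW WP]]; have [_ g] := hF W FW.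
    have [F0 [F0P F0Q]] := g P WP; exists F0; split => // Q SQ FQ.
    by exists W; split => //; apply: F0Q.
move=> C [A hA] hC.
pose Fam := fun V : (R -> Prop) -> Prop =>
  exists a, A a /\ forall P, V P <-> Spec P /\ ~ P a.
have FamO : forall V, Fam V -> zariski_open V.
  move=> V [a [Aa hV]]; exists (fun y => y = a) => P; rewrite hV.
  split => [[SP nPa]|[SP ninc]]; split => //.
    by move=> inc; apply: nPa; exact: inc a erefl.
  by move=> Pa; apply: ninc => y ->.
have cov : forall P, C P -> exists V, Fam V /\ V P.
  move=> P /hA [SP ninc].
  have [a [Aa nPa]] : exists a, A a /\ ~ P a.
    apply: NNPP => h; apply: ninc => y Ay; apply: NNPP => nPy; apply: h.
    by exists y.
  by exists (fun Q => Spec Q /\ ~ Q a); split; [exists a; split | split].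
have [s [sF scov]] := hC Fam FamO cov.
have [F [FA Fs]] : exists F : seq R, (forall a, a \in F -> A a) /\
    forall V, List.In V s -> exists a, a \in F /\ forall P, V P -> ~ P a.
  clear scov; elim: s sF => [|V s IH] sF; first by exists [::]; split.
  have [F [FA Fs]] := IH (fun W h => sF W (or_intror h)).
  have [a [Aa hV]] := sF V (or_introl erefl).
  exists (a :: F); split.
    by move=> b; rewrite in_cons => /orP [/eqP ->|]; [ | exact: FA].
  move=> W [<-|Ws].
    by exists a; split; [exact: mem_head | move=> P /hV []].
  have [b [bF hb]] := Fs W Ws; exists b; split => //.
  by rewrite in_cons bF orbT.
split; first by move=> P [].
move=> P [SP nCP]; exists F; split.
  move=> y yF; apply: NNPP => nPy; apply: nCP; apply/hA; split => // inc.
  by apply: nPy; apply: inc; exact: FA.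
move=> Q SQ FQ; split => // CQ; have [V [Vs VQ]] := scov Q CQ.
have [a [aF ha]] := Fs V Vs; exact: ha Q VQ (FQ a aF).
Qed.

Lemma loc_const (I : R -> Prop) : nu_continuous I -> forall M, maximal_ideal M ->
  exists F : seq R, (forall y, y \in F -> M y) /\
    forall Q, maximal_ideal Q -> (forall y, y \in F -> Q y) -> nu I Q = nu I M.
Proof.
move=> hc M hM; have [U [hU hUV]] := hc (nu I M).
have [_ UM] := (hUV M).1 (conj hM erefl).
have [F [FM FQ]] := io_basic hU UM; exists F; split => // Q hQ FQ'.
have UQ := FQ Q (max_prime hQ) FQ'.
by have [] := (hUV Q).2 (conj hQ UQ).
Qed.

End Topo.

Lemma min_ex (P : nat -> Prop) n : P n -> exists m, P m /\ forall k, P k -> (m <= k)%N.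
Proof.
elim/ltn_ind: n => n IH Pn.
case: (classic (exists k, P k /\ (k < n)%N)) => [[k [Pk lt]]|nk].
  exact: IH lt Pk.
exists n; split => // k Pk; rewrite leqNgt; apply/negP => lt; apply: nk.
by exists k.
Qed.

Section Nu.
Variable R : idomainType.
Hypothesis hR : almost_dedekind R.
Local Notation tof := (@FracField.tofrac R).

Lemma val_spec (M : R -> Prop) : maximal_ideal M -> DVR_valuation M (vM M).
Proof.
move=> hM; have [v hv] := hR hM; rewrite /vM; apply: epsilon_spec; by exists v.
Qed.

Section AtM.
Variable M : R -> Prop.
Hypothesis hM : maximal_ideal M.
Let hv := val_spec hM.
Local Notation v := (vM M).

Lemma nu_spec A : nonzero_ideal A -> is_inf_val A M (nu A M).
Proof.
move=> [hA [a [Aa a0]]]; rewrite /nu; apply: epsilon_spec.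
pose P n := exists b, A b /\ b != 0 /\ v (tof b) = n%:Z.
have P0 : P `|v (tof a)|%N by exists a; rewrite gez0_abs // (vR hM hv).
have [m [Pm mmin]] := min_ex P0.
exists m%:Z; split => // i Ai i0.
have h := vR hM hv i0.
have : P `|v (tof i)|%N by exists i; rewrite gez0_abs.
by move/mmin; rewrite -lez_nat gez0_abs.
Qed.

Lemma nu_le A a : nonzero_ideal A -> A a -> a != 0 -> nu A M <= v (tof a).
Proof. by move=> hA; have [_ h] := nu_spec hA; apply: h. Qed.

Lemma nu_att A : nonzero_ideal A -> exists a, A a /\ a != 0 /\ v (tof a) = nu A M.
Proof. by move=> hA; have [h _] := nu_spec hA. Qed.

Lemma nu_ge0 A : nonzero_ideal A -> 0 <= nu A M.
Proof.
move=> hA; have [a [Aa [a0 <-]]] := nu_att hA; exact: (vR hM hv).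
Qed.

Lemma nu_unique A n : nonzero_ideal A ->
  (exists a, A a /\ a != 0 /\ v (tof a) = n) ->
  (forall a, A a -> a != 0 -> n <= v (tof a)) -> nu A M = n.
Proof.
move=> hA [a [Aa [a0 va]]] low.
have h1 := nu_le hA Aa a0.
have [b [Ab [b0 vb]]] := nu_att hA.
have h2 := low b Ab b0.
apply/eqP; rewrite eq_le; apply/andP; split; first by rewrite -va.
by rewrite -vb.
Qed.

Lemma nu_eq0 A s : nonzero_ideal A -> A s -> ~ M s -> nu A M = 0.
Proof.
move=> hA As nMs.
have s0 : s != 0 by apply/eqP => s0; apply: nMs; rewrite s0; exact: M0.
have := nu_le hA As s0; rewrite (vM_zero hM hv nMs) => h.
have := nu_ge0 hA => h'; apply/eqP; rewrite eq_le h h'.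
done.
Qed.

End AtM.

Lemma nu_ext (A B M : R -> Prop) : (forall x, A x <-> B x) -> nu A M = nu B M.
Proof.
move=> e; have -> // : A = B.
by apply: functional_extensionality => x; apply: propositional_extensionality.
Qed.

Lemma mul_ideal (A B : R -> Prop) : is_ideal A -> is_ideal B -> is_ideal (ideal_mul A B).
Proof.
move=> [A0 AD AM] [B0 BD BM]; split.
- by exists [::]; rewrite big_nil.
- move=> x y [s1 [h1 ->]] [s2 [h2 ->]]; exists (s1 ++ s2); split.
    by move=> p; rewrite mem_cat => /orP [/h1|/h2].
  by rewrite big_cat.
- move=> r x [s [hs ->]]; exists [seq (r * p.1, p.2) | p <- s]; split.
    move=> p /mapP [q qs ->] /=; have [Aq Bq] := hs q qs; split => //.
    exact: AM.
  by rewrite big_map mulr_sumr; apply: eq_bigr => p _; rewrite mulrA.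
Qed.

Lemma mul_nonzero (A B : R -> Prop) : nonzero_ideal A -> nonzero_ideal B ->
  nonzero_ideal (ideal_mul A B).
Proof.
move=> [hA [a [Aa a0]]] [hB [b [Bb b0]]]; split; first exact: mul_ideal.
exists (a * b); split; last by rewrite mulf_neq0.
by exists [:: (a, b)]; split; [move=> p; rewrite inE => /eqP -> | rewrite big_seq1].
Qed.

Lemma nu_mul (A B M : R -> Prop) : maximal_ideal M -> nonzero_ideal A -> nonzero_ideal B ->
  nu (ideal_mul A B) M = nu A M + nu B M.
Proof.
move=> hM hA hB; have hv := val_spec hM.
apply: (nu_unique hM (mul_nonzero hA hB)).
  have [a [Aa [a0 va]]] := nu_att hM hA.
  have [b [Bb [b0 vb]]] := nu_att hM hB.
  exists (a * b); split; last by rewrite mulf_neq0 // (vmulR hv) // va vb.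
  by exists [:: (a, b)]; split; [move=> p; rewrite inE => /eqP -> | rewrite big_seq1].
move=> x [s [hs ->]] x0.
apply: (vsum hv (F := fun p => p.1 * p.2)) => // p ps p0.
have [Ap Bp] := hs p ps.
move: p0; rewrite mulf_eq0 negb_or => /andP [p1 p2].
rewrite (vmulR hv) //; apply: lerD; exact: nu_le.
Qed.

Lemma True_nonzero : nonzero_ideal (fun _ : R => True).
Proof. by split; [split | exists 1; split => //; exact: oner_neq0]. Qed.

Lemma nu_True (M : R -> Prop) : maximal_ideal M -> nu (fun _ : R => True) M = 0.
Proof. move=> hM; apply: (nu_eq0 hM True_nonzero) => //; exact: nM1. Qed.

Lemma prod_spec (Js : seq (R -> Prop)) :
  (forall J, List.In J Js -> nonzero_ideal J) ->
  nonzero_ideal (ideal_prod Js) /\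
  forall M, maximal_ideal M -> nu (ideal_prod Js) M = \sum_(J <- Js) nu J M.
Proof.
elim: Js => [|J Js IH] hJs.
  by split; [exact: True_nonzero | move=> M hM; rewrite big_nil nu_True].
have [hP eP] := IH (fun J' h => hJs J' (or_intror h)).
have hJ := hJs J (or_introl erefl).
split; first exact: mul_nonzero.
by move=> M hM; rewrite big_cons /= nu_mul // eP.
Qed.

Lemma prod_cont (Js : seq (R -> Prop)) :
  (forall J, List.In J Js -> continuous_ideal J) -> nu_continuous (ideal_prod Js).
Proof.
elim: Js => [|J Js IH] hJs.
  apply: (cont_ext (f := fun _ => 0)); last exact: cont_const.
  by move=> M hM; rewrite nu_True.
have hP := IH (fun J' h => hJs J' (or_intror h)).
have [hJn hJc] := hJs J (or_introl erefl).
have [hPn _] := prod_spec (fun J' h => (hJs J' (or_intror h)).1).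
apply: (cont_ext (f := fun M => nu J M + nu (ideal_prod Js) M)); last first.
  exact: cont_add.
by move=> M hM /=; rewrite nu_mul.
Qed.

End Nu.

Lemma inP_seq (T : eqType) (x : T) (s : seq T) : List.In x s -> x \in s.
Proof.
elim: s => [//|y s IH] /= [->|h]; first by rewrite mem_head.
by rewrite in_cons IH ?orbT.
Qed.

Lemma in_map_seq (A B : Type) (f : A -> B) (s : seq A) y :
  List.In y [seq f i | i <- s] -> exists i, f i = y /\ List.In i s.
Proof.
elim: s => [//|a s IH] /= [<-|h]; first by exists a; split => //; left.
by have [i [e hi]] := IH h; exists i; split => //; right.
Qed.

Lemma count_iota (k m : nat) :
  \sum_(i <- iota 0 k) (if i%:Z < m%:Z then 1 else 0 : int) = (minn k m)%:Z.
Proof.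
elim: k => [|k IH]; first by rewrite big_nil min0n.
rewrite -addn1 iotaD big_cat /= big_cons big_nil add0n addr0 IH ltz_nat.
case: ltnP => h.
  have -> : minn (k + 1) m = k + 1 by apply/minn_idPl; rewrite addn1.
  by rewrite PoszD.
have -> : minn (k + 1) m = m by apply/minn_idPr; rewrite addn1; exact: leqW.
by rewrite addr0.
Qed.

Section Main.
Variable R : idomainType.
Hypothesis hR : almost_dedekind R.
Local Notation tof := (@FracField.tofrac R).

Lemma idealD (A : R -> Prop) x y : is_ideal A -> A x -> A y -> A (x + y).
Proof. by case=> _ h _; apply: h. Qed.
Lemma idealM (A : R -> Prop) r x : is_ideal A -> A x -> A (r * x).
Proof. by case=> _ _ h; apply: h. Qed.

Lemma local_incl (A B : R -> Prop) : nonzero_ideal A -> nonzero_ideal B ->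
  (forall M, maximal_ideal M -> nu B M <= nu A M) -> incl A B.
Proof.
move=> hA hB hle r Ar; case: (eqVneq r 0) => [->|r0]; first by case: hB => [[]].
pose C := fun s => B (s * r).
have hC : is_ideal C.
  case: hB => [[B0 BD BM] _]; split.
  - by rewrite /C mul0r.
  - by move=> x y; rewrite /C mulrDl; exact: BD.
  - by move=> t x; rewrite /C -mulrA; exact: BM.
case: (classic (C 1)) => [|nC1]; first by rewrite /C mul1r.
have [M [hM CM]] := exists_maximal hC nC1.
have hv := val_spec hR hM.
have [b [Bb [b0 vb]]] := nu_att hR hM hB.
have : vM M (tof b) <= vM M (tof r).
  by rewrite vb; apply: le_trans (hle M hM) _; exact: nu_le.
move/(div_in hM hv r0 b0) => [c [s [nMs e]]].
exfalso; apply: nMs; apply: CM; rewrite /C e; case: hB => [[_ _ BM] _]; exact: BM.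
Qed.

Lemma sep (M : R -> Prop) x (F : seq R) : maximal_ideal M -> x != 0 ->
  (forall y, y \in F -> M y) ->
  exists s, ~ M s /\ forall Q, maximal_ideal Q -> Q x -> ~ Q s ->
    forall y, y \in F -> Q y.
Proof.
move=> hM x0; have hv := val_spec hR hM.
elim: F => [|a F IH] hF.
  by exists 1; split; [exact: nM1 | move=> Q _ _ _ y].
have hF' : forall y, y \in F -> M y by move=> y h; apply: hF; rewrite in_cons h orbT.
have [s' [nMs' hs']] := IH hF'.
have Ma := hF a (mem_head a F).
case: (eqVneq a 0) => [a0|a0].
  exists s'; split => // Q hQ Qx nQs y; rewrite in_cons => /orP [/eqP ->|].
    by rewrite a0; exact: M0 hQ.
  exact: hs'.
have va := vM_pos hM hv a0 Ma.
pose N := `|vM M (tof x)|%N.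
have : vM M (tof x) <= vM M (tof (a ^+ N)).
  rewrite (vexpR hv) // /N gez0_abs; last exact: (vR hM hv).
  have := vR hM hv x0; nia.
move/(div_in hM hv (expf_neq0 N a0) x0) => [c [t [nMt e]]].
exists (t * s'); split.
  by have [_ _ hp] := max_prime hM; move/hp => [].
move=> Q hQ Qx nQts.
have nQt : ~ Q t by move=> Qt; apply: nQts; rewrite mulrC; exact: Mmul.
have nQs' : ~ Q s' by move=> Qs; apply: nQts; exact: Mmul.
move=> y; rewrite in_cons => /orP [/eqP ->|yF]; last exact: hs'.
have : Q (t * a ^+ N) by rewrite e; exact: Mmul.
have [_ _ hp] := max_prime hQ; case/hp => // .
clear e; case: (N) => [|N']; last exact: prime_pow (max_prime hQ).
by rewrite expr0 => /(nM1 hQ).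
Qed.

Section Cont.
Variable I : R -> Prop.
Hypothesis hI : nonzero_ideal I.
Hypothesis hc : nu_continuous I.
Variable x : R.
Hypothesis Ix : I x.
Hypothesis x0 : x != 0.

Lemma key (M : R -> Prop) : maximal_ideal M -> exists s, ~ M s /\
  forall Q, maximal_ideal Q -> Q x -> ~ Q s -> nu I Q = nu I M.
Proof.
move=> hM; have [F [FM FQ]] := loc_const hc hM.
have [s [nMs hs]] := sep hM x0 FM.
by exists s; split => // Q hQ Qx nQs; apply: FQ => //; exact: hs.
Qed.

Lemma x_in (M : R -> Prop) : maximal_ideal M -> 0 < nu I M -> M x.
Proof.
move=> hM h; apply: NNPP => nMx; move: h; by rewrite (nu_eq0 hR hM hI Ix nMx).
Qed.

Lemma bounded : exists N : nat, forall M, maximal_ideal M -> nu I M <= N%:Z.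
Proof.
pose sepf (M : R -> Prop) := epsilon (inhabits 0) (fun s => ~ M s /\
  forall Q, maximal_ideal Q -> Q x -> ~ Q s -> nu I Q = nu I M).
have sepP : forall M, maximal_ideal M -> ~ M (sepf M) /\
    forall Q, maximal_ideal Q -> Q x -> ~ Q (sepf M) -> nu I Q = nu I M.
  by move=> M hM; exact: (epsilon_spec _ _ (key hM)).
pose L := fun r => exists c (l : seq (R * (R -> Prop))),
  (forall p, List.In p l -> maximal_ideal p.2) /\
  r = c * x + \sum_(p <- l) p.1 * sepf p.2.
have hL : is_ideal L.
  split.
  - by exists 0, [::]; rewrite mul0r big_nil addr0.
  - move=> y z [c1 [l1 [h1 ->]]] [c2 [l2 [h2 ->]]]; exists (c1 + c2), (l1 ++ l2).
    split; last by rewrite big_cat mulrDl addrACA.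
    by move=> p hp; case: (List.in_app_or _ _ _ hp) => h; [exact: h1 | exact: h2].
  - move=> r y [c [l [h ->]]]; exists (r * c), [seq (r * p.1, p.2) | p <- l].
    split.
      by move=> p /List.in_map_iff [q [<- ql]] /=; apply: h.
    rewrite mulrDr big_map mulr_sumr mulrA; congr (_ + _).
    by apply: eq_bigr => p _ /=; rewrite mulrA.
case: (classic (L 1)) => [[c [l [hl e1]]]|nL1]; last first.
  have [M [hM LM]] := exists_maximal hL nL1.
  have : M (sepf M).
    apply: LM; exists 0, [:: (1, M)]; split.
      by move=> p [<-|[]].
    by rewrite mul0r add0r big_seq1 mul1r.
  by have [] := sepP M hM.
have [N hN] : exists N : nat, forall p, List.In p l -> nu I p.2 <= N%:Z.
  clear e1; elim: l hl => [|p l IH] hl; first by exists 0%N => p [].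
  have [N hN] := IH (fun q h => hl q (or_intror h)).
  exists (maxn N `|nu I p.2|%N) => q [<-|ql].
    have h := nu_ge0 hR (hl p (or_introl erefl)) hI.
    by rewrite -{1}(gez0_abs h) lez_nat leq_maxr.
  by apply: le_trans (hN q ql) _; rewrite lez_nat leq_maxl.
exists N => Q hQ.
case: (classic (Q x)) => [Qx|nQx]; last first.
  by rewrite (nu_eq0 hR hQ hI Ix nQx).
have [p [pl nQs]] : exists p, List.In p l /\ ~ Q (sepf p.2).
  apply: NNPP => h; apply: (nM1 hQ); rewrite e1.
  have hQi : is_ideal Q by case: hQ.
  apply: idealD => //; first exact: idealM.
  have : forall p, List.In p l -> Q (sepf p.2).
    by move=> p pl; apply: NNPP => nQ; apply: h; exists p.
  elim: (l) => [|q l' IH] h'; first by rewrite big_nil; exact: M0 hQ.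
  rewrite big_cons; apply: idealD => //; first by apply: idealM => //; apply: h'; left.
  by apply: IH => q' hq; apply: h'; right.
rewrite ((sepP p.2 (hl p pl)).2 Q hQ Qx nQs); exact: hN.
Qed.

Definition Jt (i : nat) : R -> Prop :=
  fun r => forall M, maximal_ideal M -> i%:Z < nu I M -> M r.

Lemma Jt_ideal i : is_ideal (Jt i).
Proof.
split.
- by move=> M hM _; exact: M0 hM.
- move=> a b ha hb M hM h; have hMi : is_ideal M by case: hM.
  by apply: idealD => //; [apply: ha | apply: hb].
- by move=> r a ha M hM h; apply: Mmul => //; apply: ha.
Qed.

Lemma Jt_rad i : radical_ideal (Jt i).
Proof.
split; first exact: Jt_ideal.
by move=> a n h M hM lt; apply: (prime_pow (n := n) (max_prime hM)); apply: h.
Qed.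

Lemma Jt_x i : Jt i x.
Proof. move=> M hM lt; apply: x_in => //; lia. Qed.

Lemma Jt_nonzero i : nonzero_ideal (Jt i).
Proof. split; [exact: Jt_ideal | exists x; split => //; exact: Jt_x]. Qed.

Lemma Jt_nu i M : maximal_ideal M ->
  nu (Jt i) M = (if i%:Z < nu I M then 1 else 0).
Proof.
move=> hM; have hv := val_spec hR hM.
case: ifP => lt.
  have [j [Jj [j0 vj]]] := nu_att hR hM (Jt_nonzero i).
  have Mj : M j by apply: Jj.
  have vpos := vM_pos hM hv j0 Mj.
  have [a [a0 va]] := unif hM hv.
  pose m := `|nu (Jt i) M|%N.
  have hm : nu (Jt i) M = m%:Z by rewrite /m gez0_abs // -vj; exact: ltW.
  have : vM M (tof j) <= vM M (tof (a ^+ m)).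
    by rewrite (vexpR hv) // va mul1r vj hm.
  move/(div_in hM hv (expf_neq0 m a0) j0) => [c [s [nMs e]]].
  have s0 : s != 0 by apply/eqP => s0; apply: nMs; rewrite s0; exact: M0.
  have m0 : (0 < m)%N by rewrite -ltz_nat -hm -vj.
  have Jsa : Jt i (s * a).
    have [_ hrad] := Jt_rad i.
    case: m m0 e {hm} => // m' _ e.
    apply: (hrad _ m').
    have -> : (s * a) ^+ m'.+1 = s ^+ m' * (s * a ^+ m'.+1).
      by rewrite exprMn mulrA -exprSr.
    rewrite e; apply: (idealM _ (Jt_ideal i)).
    by apply: (idealM _ (Jt_ideal i)).
  have := nu_le hR hM (Jt_nonzero i) Jsa (mulf_neq0 s0 a0).
  rewrite (vmulR hv) // va (vM_zero hM hv nMs) add0r => hle.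
  have := vpos; rewrite vj => hge; apply/eqP; rewrite eq_le hle /=; exact: hge.
have [s [nMs hs]] := key hM.
apply: (nu_eq0 hR hM (Jt_nonzero i) _ nMs).
move=> Q hQ ltQ; apply: NNPP => nQs.
have Qx : Q x by apply: x_in => //; lia.
by move: ltQ; rewrite (hs Q hQ Qx nQs) lt.
Qed.

Lemma Jt_cont i : continuous_ideal (Jt i).
Proof.
split; first exact: Jt_nonzero.
apply: (cont_ext (f := fun M => (fun n => if i%:Z < n then 1 else 0) (nu I M))).
  by move=> M hM /=; rewrite Jt_nu.
exact: (cont_comp (fun n => if i%:Z < n then 1 else 0) hc).
Qed.

End Cont.

Lemma dir1 (I : R -> Prop) : nonzero_ideal I -> nu_continuous I ->
  exists (k : nat) (J : nat -> R -> Prop), (0 < k)%N /\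
       (forall i, (i < k)%N -> radical_ideal (J i) /\ continuous_ideal (J i)) /\
       (forall i, (i.+1 < k)%N -> incl (J i) (J i.+1)) /\
       (forall x, I x <-> ideal_prod [seq J i | i <- iota 0 k] x).
Proof.
move=> hI hc; have [_ [x [Ix x0]]] := hI.
have [N hN] := bounded hI hc Ix x0.
exists N.+1, (Jt I); split => //; split.
  by move=> i _; split; [exact: Jt_rad | exact: (Jt_cont hI hc Ix x0)].
split.
  move=> i _ r hr M hM lt; apply: hr => //; move: lt; rewrite -(addn1 i) PoszD; lia.
have hall : forall J, List.In J [seq Jt I i | i <- iota 0 N.+1] -> nonzero_ideal J.
  move=> J hJ; have [i [<- _]] := in_map_seq hJ.
  exact: (Jt_nonzero hI Ix x0).
have [hP eP] := prod_spec hR hall.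
have enu : forall M, maximal_ideal M -> nu (ideal_prod [seq Jt I i | i <- iota 0 N.+1]) M = nu I M.
  move=> M hM; rewrite eP // big_map.
  rewrite (eq_bigr (fun i => if i%:Z < nu I M then 1 else 0)); last first.
    by move=> i _; rewrite (Jt_nu hI hc Ix x0).
  have h0 := nu_ge0 hR hM hI.
  rewrite -(gez0_abs h0) count_iota; congr Posz; apply/minn_idPr.
  rewrite -lez_nat (gez0_abs h0); apply: le_trans (hN M hM) _.
  by rewrite lez_nat leqnSn.
move=> r; split.
  by apply: local_incl => // M hM; rewrite enu.
by apply: local_incl => // M hM; rewrite enu.
Qed.

Lemma dir3 (I : R -> Prop) : nonzero_ideal I ->
  (exists (k : nat) (J : nat -> R -> Prop), (0 < k)%N /\
       (forall i, (i < k)%N -> radical_ideal (J i) /\ continuous_ideal (J i)) /\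
       (forall x, I x <-> ideal_prod [seq J i | i <- iota 0 k] x)) ->
  nu_continuous I.
Proof.
move=> hI [k [J [_ [hJ e]]]].
have hall : forall J', List.In J' [seq J i | i <- iota 0 k] -> continuous_ideal J'.
  move=> J' hJ'; have [i [<- hi]] := in_map_seq hJ'.
  have := inP_seq hi; rewrite mem_iota add0n => /andP [_ lt].
  exact: (hJ i lt).2.
apply: (cont_ext (f := nu (ideal_prod [seq J i | i <- iota 0 k]))).
  by move=> M hM; apply: nu_ext => y; rewrite e.
exact: prod_cont.
Qed.

End Main.

Local Close Scope ring_scope.

Theorem proposition3p8 (R : idomainType) (hR : almost_dedekind R)
    (I : R -> Prop) (hI : nonzero_ideal I) :
  (nu_continuous I <->
     exists (k : nat) (J : nat -> R -> Prop), (0 < k)%N /\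
       (forall i, (i < k)%N -> radical_ideal (J i) /\ continuous_ideal (J i)) /\
       (forall i, (i.+1 < k)%N -> incl (J i) (J i.+1)) /\
       (forall x, I x <-> ideal_prod [seq J i | i <- iota 0 k] x)) /\
  (nu_continuous I <->
     exists (k : nat) (J : nat -> R -> Prop), (0 < k)%N /\
       (forall i, (i < k)%N -> radical_ideal (J i) /\ continuous_ideal (J i)) /\
       (forall x, I x <-> ideal_prod [seq J i | i <- iota 0 k] x)).
Proof.
split; split.
- exact: dir1.
- move=> [k [J [k0 [hJ [_ e]]]]]; apply: (dir3 hR hI); exists k, J; split => //.
- move=> hc; have [k [J [k0 [hJ [_ e]]]]] := dir1 hR hI hc; exists k, J; split => //.
- exact: dir3.
Qed.
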